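(* Let $0<q<1$, $q^*=2-q$, and let $X_1$ be a real random variable. Define $\theta(a)=\left[\mathbb{E}\exp_{q^*}(aX_1)\right]^{1-q}a$. Then $\theta$ is a strictly increasing function of $a$ on the open interval of values $a$ for which $0<\mathbb{E}\exp_{q^*}(aX_1)<+\infty$.
   Context: For $q\in(0,2)$, $q\ne1$, the $q$-deformed exponential is $\exp_q(u)=[1+(1-q)u]_+^{1/(1-q)}$ for real $u$ (value in $[0,+\infty]$), where $[u]_+=\max(u,0)$. *)

(* Defs.v *)
From HB Require Import structures.
From mathcomp Require Import all_boot all_order all_algebra.
From mathcomp Require Import all_classical all_reals all_analysis.
Set Implicit Arguments. Unset Strict Implicit. Unset Printing Implicit Defensive.
Import Order.TTheory GRing.Theory Num.Theory.
Local Open Scope ring_scope.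

(* q-deformed exponential, valued in [0, +oo]:
   exp_q(u) = [1 + (1-q) u]_+ ^ (1/(1-q)),  for q in (0,2), q <> 1.
   When the base is 0 and the exponent 1/(1-q) is negative (q > 1),
   the value is +oo; otherwise it is the real power (0^e = 0 for e > 0). *)
Definition expq {R : realType} (q u : R) : \bar R :=
  let b := Num.max (1 + (1 - q) * u) 0 in
  if (b == 0) && (1 < q) then +oo%E else (b `^ (1 / (1 - q)))%:E.

(* Main.v *)
Require Import Defs.
From HB Require Import structures.
From mathcomp Require Import all_boot all_order all_algebra.
From mathcomp Require Import all_classical all_reals all_analysis measurable_realfun.
From mathcomp Require Import ring lra.
Import Order.TTheory GRing.Theory Num.Theory.
Local Open Scope ring_scope.
Lemma hE (R : realType) (q u : R) : 0 < q < 1 ->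
  expq (2 - q) u = if 1 - (1 - q) * u <= 0 then +oo%E
                   else ((1 - (1 - q) * u) `^ (- (1 - q)^-1))%:E.
Proof.
case/andP=> q0 q1; rewrite /expq.
have -> : 1 < 2 - q by lra.
have -> : 1 + (1 - (2 - q)) * u = 1 - (1 - q) * u by ring.
have -> : 1 / (1 - (2 - q)) = - (1 - q)^-1.
  by rewrite (_ : 1 - (2 - q) = - (1 - q)) ?invrN ?div1r //; ring.
case: leP => h.

  by rewrite eqxx.
by rewrite gt_eqF.
Qed.

Lemma keyK (R : realType) (c s t y : R) : 0 < c -> 0 < s -> s < t ->
  0 < 1 - c * t * y ->
  0 < 1 - c * s * y /\
  s `^ c^-1 * (1 - c * s * y) `^ (- c^-1) < t `^ c^-1 * (1 - c * t * y) `^ (- c^-1).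
Proof.
move=> c0 s0 st v0.
have u0 : 0 < 1 - c * s * y.
  have [y0|y0] := leP y 0; first by nra.
  nra.
split => //.
rewrite !powRN.
set A := s `^ _; set B := (1 - c*s*y) `^ _; set C := t `^ _; set D := (1 - c*t*y) `^ _.
have A0 : 0 < A by apply: powR_gt0.
have B0 : 0 < B by apply: powR_gt0.
have C0 : 0 < C by apply: powR_gt0; lra.
have D0 : 0 < D by apply: powR_gt0.
have : A * D < C * B.
  rewrite /A /D /C /B -!powRM; try lra.
  apply: gt0_ltr_powR; rewrite ?invr_gt0 // ?nnegrE; nra.
move=> h.
have e1 : A / B = A * D / (B * D) by field; apply/andP; split; rewrite gt_eqF.
have e2 : C / D = C * B / (B * D) by field; apply/andP; split; rewrite gt_eqF.
by rewrite e1 e2 ltr_pM2r // invr_gt0 mulr_gt0.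
Qed.
Lemma strict_int (R : realType) (d : measure_display) (T : measurableType d)
  (P : probability T R) (F G : T -> \bar R) :
  measurable_fun [set: T] F -> measurable_fun [set: T] G ->
  (forall x, 0 <= F x)%E -> (forall x, F x <= G x)%E ->
  (forall x, G x < +oo -> F x < G x)%E ->
  (\int[P]_x G x < +oo)%E -> (\int[P]_x F x < \int[P]_x G x)%E.
Proof.
move=> mF mG F0 FG FGs Glt.
have G0 x : (0 <= G x)%E by apply: le_trans (F0 x) (FG x).
have intG : P.-integrable setT G.
  apply/integrableP; split => //.
  by under eq_integral do rewrite gee0_abs //.
have aeG := integrable_ae measurableT intG.
pose H x := ((Num.max (fine (G x) - fine (F x)) 0)%:E).
have mH : measurable_fun setT H.
  apply/measurable_EFinP; apply: measurable_maxr => //.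
  by apply: measurable_funB; apply: measurableT_comp.
have H0 x : (0 <= H x)%E by rewrite lee_fin le_max lexx orbT.
have eGFH : (\int[P]_x G x = \int[P]_x F x + \int[P]_x H x)%E.
  rewrite -ge0_integralD //. idtac.
  apply: ae_eq_integral => //; first by apply: emeasurable_funD.
  apply: filterS aeG => x /(_ I) Gfin _.
  have Ffin : F x \is a fin_num.
    by rewrite ge0_fin_numE // (le_lt_trans (FG x)) // ltey_eq Gfin.
  rewrite /H max_l; last first.
    by rewrite subr_ge0 -lee_fin !fineK.
  by rewrite EFinB !fineK // [(F x + _)%E]addeC subeK.
have FleG : (\int[P]_x F x <= \int[P]_x G x)%E by apply: ge0_le_integral.
rewrite lt_neqAle FleG andbT; apply/eqP => eFG.
have Ffin : (\int[P]_x F x)%E \is a fin_num.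
  by rewrite ge0_fin_numE ?integral_ge0 // eFG.
have iH0 : (\int[P]_x H x = 0)%E.
  move: eGFH; rewrite -eFG => h.
  by rewrite -(addeK (\int[P]_x H x)%E Ffin) [X in (X - _)%E]addeC -h subee.
have : ae_eq P setT H (cst 0).
  apply/(ae_eq_integral_abs _ measurableT mH).
  by under eq_integral do rewrite gee0_abs //.
move=> aeH.
have : {ae P, forall x, setT x -> False}.
  apply: filterS2 aeG aeH => x /(_ I) Gfin /(_ I) /= Hx _.
  have Ffx : F x \is a fin_num.
    by rewrite ge0_fin_numE // (le_lt_trans (FG x)) // ltey_eq Gfin.
  have := FGs x; rewrite ltey_eq Gfin => /(_ isT).
  rewrite -(fineK Ffx) -(fineK Gfin) lte_fin -subr_gt0 => hlt.
  by move: Hx; rewrite /H max_l ?ltW // => -[] /eqP; rewrite gt_eqF.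
case=> N [mN PN0 sub].
have : (P setT <= P N)%E.
  apply: le_measure; rewrite ?inE //.
  by move=> x _; apply: sub => /= /(_ I).
by rewrite probability_setT PN0 lee_fin ler10.
Qed.

Lemma mh (R : realType) (d : measure_display) (T : measurableType d)
  (q s : R) (Y : T -> R) : measurable_fun [set: T] Y -> 0 < q < 1 ->
  measurable_fun [set: T] (fun x => expq (2 - q) (s * Y x)).
Proof.
move=> mY hq.
have mb : measurable_fun [set: T] (fun x => 1 - (1 - q) * (s * Y x)).
  apply: measurable_funB => //; apply: measurable_funM => //.
  by apply: measurable_funM.
rewrite (_ : (fun x => _) = (fun x => if 1 - (1 - q) * (s * Y x) <= 0 then +oo%E
                   else ((1 - (1 - q) * (s * Y x)) `^ (- (1 - q)^-1))%:E)); last first.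
  by apply/funext => x; rewrite hE.
apply: measurable_fun_ifT => //.
  by apply: measurable_fun_ler.
apply/measurable_EFinP.
exact: measurableT_comp (measurable_powR _) mb.
Qed.


Lemma fin_aux (R : realType) (a b : R) (I J : \bar R) :
  I \is a fin_num -> J \is a fin_num -> (a%:E * I < b%:E * J)%E ->
  a * fine I < b * fine J.
Proof. by case: I => // i; case: J => // j _ _; rewrite -!EFinM lte_fin. Qed.

Lemma core (R : realType) (d : measure_display) (T : measurableType d)
  (P : probability T R) (q s t : R) (Y : T -> R) :
  measurable_fun [set: T] Y -> 0 < q < 1 -> 0 < s -> s < t ->
  (\int[P]_x expq (2 - q) (s * Y x) < +oo)%E ->
  (\int[P]_x expq (2 - q) (t * Y x) < +oo)%E ->
  s `^ (1 - q)^-1 * fine (\int[P]_x expq (2 - q) (s * Y x))%E <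
  t `^ (1 - q)^-1 * fine (\int[P]_x expq (2 - q) (t * Y x))%E.
Proof.
move=> mY hq s0 st Is It.
have c0 : 0 < 1 - q by case/andP: hq => *; lra.
have h0 (u : R) : (0%E <= expq (2 - q) u)%E.
  by rewrite hE //; case: ifP => _; rewrite ?leey ?lee_fin ?powR_ge0.
have Is0 : (0%E <= \int[P]_x expq (2 - q) (s * Y x))%E by apply: integral_ge0 => x _; exact: h0.
have It0 : (0%E <= \int[P]_x expq (2 - q) (t * Y x))%E by apply: integral_ge0 => x _; exact: h0.
have Isf : (\int[P]_x expq (2 - q) (s * Y x))%E \is a fin_num.
  rewrite (ge0_fin_numE Is0); exact: Is.
have Itf : (\int[P]_x expq (2 - q) (t * Y x))%E \is a fin_num.
  rewrite (ge0_fin_numE It0); exact: It.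
apply: (@fin_aux _ _ _ _ _ Isf Itf).
have sp0 : 0 <= s `^ (1 - q)^-1 by apply: powR_ge0.
have tp0 : 0 <= t `^ (1 - q)^-1 by apply: powR_ge0.
have mhs := @mh _ _ _ q s Y mY hq.
have mht := @mh _ _ _ q t Y mY hq.
have h0' (u : R) : forall x, [set: T]%classic x -> (0%E <= expq (2 - q) (u * Y x))%E.
  by move=> x _; apply: h0.
have eq1 := ge0_integralZl P measurableT mhs (h0' s) (k := (s `^ (1 - q)^-1)%:E) (sp0 : (0%E <= _%:E)%E).
have eq2 := ge0_integralZl P measurableT mht (h0' t) (k := (t `^ (1 - q)^-1)%:E) (tp0 : (0%E <= _%:E)%E).
have key : (\int[P]_x ((s `^ (1 - q)^-1)%:E * expq (2 - q) (s * Y x)) <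
   \int[P]_x ((t `^ (1 - q)^-1)%:E * expq (2 - q) (t * Y x)))%E.
  apply: strict_int.
  - by apply: measurable_funeM.
  - by apply: measurable_funeM.
  - by move=> x; apply: mule_ge0; [rewrite lee_fin | exact: h0].
  - move=> x; rewrite !hE //.
    case: (leP (1 - (1 - q) * (t * Y x)) 0) => ht.
      by rewrite gt0_muley ?leey // lte_fin powR_gt0 //; lra.
    have [u0 K] := @keyK _ (1 - q) s t (Y x) c0 s0 st (ltac:(by rewrite -mulrA)).
    have -> : (1 - (1-q) * (s * Y x) <= 0) = false by rewrite mulrA leNgt u0.
    by rewrite -!EFinM lee_fin !mulrA ltW.
  - move=> x; rewrite !hE //.
    case: (leP (1 - (1 - q) * (t * Y x)) 0) => ht.
      by rewrite gt0_muley ?ltxx // lte_fin powR_gt0 //; lra.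
    move=> _.
    have [u0 K] := @keyK _ (1 - q) s t (Y x) c0 s0 st (ltac:(by rewrite -mulrA)).
    have -> : (1 - (1-q) * (s * Y x) <= 0) = false by rewrite mulrA leNgt u0.
    by rewrite -!EFinM lte_fin !mulrA.
  - rewrite eq2.
    have -> : (\int[P]_x expq (2 - q) (t * Y x))%E = (fine (\int[P]_x expq (2 - q) (t * Y x)))%:E.
      exact: (esym (fineK Itf)).
    by rewrite -EFinM ltry.
by move: key; rewrite eq1 eq2.
Qed.


Lemma thetaE (R : realType) (c s I : R) : 0 < c -> 0 <= s -> 0 <= I ->
  (s `^ c^-1 * I) `^ c = I `^ c * s.
Proof.
move=> c0 s0 I0; rewrite powRM ?powR_ge0 // -powRrM mulVf ?gt_eqF //.
by rewrite powRr1 // mulrC.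
Qed.

Theorem lemma1 (R : realType) (d : measure_display) (T : measurableType d)
  (P : probability T R) (X : T -> R) (mX : measurable_fun setT X) (q : R) :
  0 < q < 1 ->
  let qs := 2 - q in
  let E := fun a : R => (\int[P]_x expq qs (a * X x))%E in
  let theta := fun a : R => (fine (E a)) `^ (1 - q) * a in
  forall a b : R,
    (0 < E a < +oo)%E -> (0 < E b < +oo)%E -> a < b -> theta a < theta b.
Proof.
move=> hq qs E theta a b.
rewrite /theta; clear theta.
have EE : forall u, E u = (\int[P]_x expq (2 - q) (u * X x))%E by [].
clearbody E; clear qs.
move=> /andP[Ea0 Eaoo] /andP[Eb0 Eboo] ab.
have c0 : 0 < 1 - q by case/andP: hq => *; lra.
have Ia0 : 0 < fine (E a) by apply: fine_gt0; rewrite Ea0 Eaoo.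
have Ib0 : 0 < fine (E b) by apply: fine_gt0; rewrite Eb0 Eboo.
have Pa : 0 < fine (E a) `^ (1 - q) by apply: powR_gt0.
have Pb : 0 < fine (E b) `^ (1 - q) by apply: powR_gt0.
have [a0|a0|a0] := ltgtP 0 a.
- have b0 : 0 < b by lra.
  rewrite -(@thetaE _ _ _ _ c0 (ltW a0) (ltW Ia0)) -(@thetaE _ _ _ _ c0 (ltW b0) (ltW Ib0)).
  apply: gt0_ltr_powR => //; rewrite ?nnegrE ?mulr_ge0 ?powR_ge0 ?ltW //.
  rewrite EE in Eaoo; rewrite EE in Eboo; rewrite !EE.
  exact: (@core _ _ _ P q a b X mX hq a0 ab Eaoo Eboo).
- have [b0|b0] := ltP b 0; last first.
    have h1 : fine (E a) `^ (1 - q) * a < 0 by nra.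
    have h2 : 0 <= fine (E b) `^ (1 - q) * b by apply: mulr_ge0; lra.
    lra.
  have mNX : measurable_fun [set: T]%classic (fun x => - X x).
    exact: measurable_funN mX.
  have eN (u : R) : (fun x => expq (2 - q) ((- u) * (- X x))) = (fun x => expq (2 - q) (u * X x)).
    by apply/funext => x; rewrite mulrNN.
  have := @core _ _ _ P q (- b) (- a) (fun x => - X x) mNX hq (ltac:(lra)) (ltac:(lra)).
  rewrite !eN -!EE => /(_ Eboo Eaoo) K.
  have : ((- b) `^ (1 - q)^-1 * fine (E b)) `^ (1 - q) < ((- a) `^ (1 - q)^-1 * fine (E a)) `^ (1 - q).
    apply: gt0_ltr_powR => //; rewrite ?nnegrE ?mulr_ge0 ?powR_ge0 ?ltW //.
  rewrite (@thetaE _ _ _ _ c0 _ (ltW Ia0)) ?(@thetaE _ _ _ _ c0 _ (ltW Ib0)); try lra.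
  nra.
Qed.
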